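(* The $K_3$-WORM feasible sets of $K_3$-WORM-colorable graphs may contain arbitrarily large gaps: for every positive integer $m$ there exist a $K_3$-WORM-colorable graph $G$ and an integer $a$ such that $W^-(G,K_3)<a$, $a+m-1<W^+(G,K_3)$, and none of $a,a+1,\dots,a+m-1$ belongs to $\Phi_W(G,K_3)$.
   Context: A $K_3$-WORM coloring of a graph $G$ is an assignment of colors to the vertices of $G$ such that the three vertices of every triangle of $G$ receive exactly two distinct colors. $G$ is $K_3$-WORM-colorable if it has such a coloring; then $W^-(G,K_3)$ and $W^+(G,K_3)$ are the minimum and maximum number of colors used in a $K_3$-WORM coloring of $G$, and the feasible set $\Phi_W(G,K_3)$ is the set of integers $s$ such that $G$ has a $K_3$-WORM coloring using exactly $s$ colors. $G$ has a gap at $k$ if $W^-(G,K_3)<k<W^+(G,K_3)$ and $k\notin\Phi_W(G,K_3)$. *)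

(* Defs.v *)
From mathcomp Require Import all_boot.
Set Implicit Arguments. Unset Strict Implicit. Unset Printing Implicit Defensive.

Definition simple_graph (T : finType) (e : rel T) : Prop :=
  symmetric e /\ irreflexive e.

Definition triangle (T : finType) (e : rel T) (x y z : T) : Prop :=
  [/\ e x y, e y z & e x z].

Definition num_colors (T : finType) (c : T -> nat) : nat :=
  size (undup [seq c x | x <- enum T]).

Definition K3_worm (T : finType) (e : rel T) (c : T -> nat) : Prop :=
  forall x y z, triangle e x y z ->
    size (undup [:: c x; c y; c z]) = 2.

Definition K3_worm_colorable (T : finType) (e : rel T) : Prop :=
  exists c, K3_worm e c.

Definition feasible (T : finType) (e : rel T) (s : nat) : Prop :=
  exists c, K3_worm e c /\ num_colors c = s.

Definition is_Wminus (T : finType) (e : rel T) (k : nat) : Prop :=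
  feasible e k /\ forall s, feasible e s -> k <= s.
Definition is_Wplus (T : finType) (e : rel T) (k : nat) : Prop :=
  feasible e k /\ forall s, feasible e s -> s <= k.

(* Main.v *)
Require Import Defs.
From HB Require Import structures.
From mathcomp Require Import all_boot.
From mathcomp Require Import zify.
From Stdlib Require Import Lia Classical.
Set Implicit Arguments. Unset Strict Implicit. Unset Printing Implicit Defensive.

Definition S2 (x y z : nat) := (x = y /\ y <> z) \/ (x = z /\ x <> y) \/ (y = z /\ x <> y).
Lemma inW a b z : a <> b -> S2 a b z -> z = a \/ z = b.
Proof. rewrite /S2; lia. Qed.
Lemma in3 x y w z : S2 x y w -> S2 x y z -> S2 x w z -> z = x \/ z = y \/ z = w.
Proof. rewrite /S2; lia. Qed.
Lemma k5e a b c h y : S2 a b c -> S2 h a b -> S2 h a c -> S2 h b c ->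
  S2 y a b -> S2 y a c -> S2 y b c -> h = y.
Proof. rewrite /S2; lia. Qed.
Lemma sz2P (x y z : nat) : size (undup [:: x; y; z]) = 2 <->
  (x = y /\ y <> z) \/ (x = z /\ x <> y) \/ (y = z /\ x <> y).
Proof.
rewrite /= !inE.
case: (eqVneq x y) => [->|nxy]; case: (eqVneq y z) => [->|nyz];
  case: (eqVneq x z) => [exz|nxz] //=; rewrite ?eqxx ?inE //=;
  try (move: nxy nyz nxz => /eqP ? /eqP ? /eqP ?);
  try (move: nxy => /eqP ?); try (move: nyz => /eqP ?); try (move: nxz => /eqP ?);
  try subst; split; try lia; rewrite ?eqxx //=.
Qed.


Section G.
Variable K : nat.
Local Notation N := K.+1.

Inductive V := VU | VV | VH of 'I_N | VX of 'I_N & 'I_K | VY of 'I_N & 'I_K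
  | VA of 'I_N | VB of 'I_N | VC of 'I_N | VQ of 'I_3 | VR of 'I_3.

Definition o4 (k : nat) (h : k < 4) : 'I_4 := Ordinal h.

Definition encV (v : V) : ('I_2 + ('I_N * 'I_4)) + (('I_N * 'I_K * bool) + ('I_3 * bool)) :=
  match v with
  | VU => inl (inl ord0) | VV => inl (inl ord_max)
  | VH i => inl (inr (i, @o4 0 isT)) | VA i => inl (inr (i, @o4 1 isT))
  | VB i => inl (inr (i, @o4 2 isT)) | VC i => inl (inr (i, @o4 3 isT))
  | VX i k => inr (inl (i, k, true)) | VY i k => inr (inl (i, k, false))
  | VQ s => inr (inr (s, true)) | VR s => inr (inr (s, false)) end.

Definition decV (w : ('I_2 + ('I_N * 'I_4)) + (('I_N * 'I_K * bool) + ('I_3 * bool))) : V :=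
  match w with
  | inl (inl b) => if val b == 0 then VU else VV
  | inl (inr (i, t)) => match val t with 0 => VH i | 1 => VA i | 2 => VB i | _ => VC i end
  | inr (inl (i, k, b)) => if b then VX i k else VY i k
  | inr (inr (s, b)) => if b then VQ s else VR s end.

Lemma encVK : cancel encV decV. Proof. by case. Qed.

HB.instance Definition _ := Finite.copy V (can_type encVK).

Definition adj0 (x y : V) : bool :=
  match x, y with
  | VU, VV => true
  | VU, VH _ | VV, VH _ | VU, VX _ _ | VV, VX _ _ => true
  | VH i, VX i' _ => i == i'
  | VY i _, VH i' => i == i'
  | VY i k, VX i' k' => (i == i') && (k == k')
  | VY i k, VA j | VY i k, VB j | VY i k, VC j => j == lift i k
  | VH i, VA j | VH i, VB j | VH i, VC j => i == j
  | VA j, VB j' | VB j, VC j' | VA j, VC j' => j == j'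
  | VA _, VQ _ | VB _, VR _ => true
  | VQ s, VQ t | VR s, VR t => s < t
  | _, _ => false end.

Definition adj (x y : V) := adj0 x y || adj0 y x.

Lemma adj_sym : symmetric adj. Proof. by move=> x y; rewrite /adj orbC. Qed.
Lemma adj_irr : irreflexive adj. Proof. case=> //= s; rewrite /adj /= orbb ?ltnn //. Qed.

Definition wormV (c : V -> nat) := forall x y z, adj x y -> adj y z -> adj x z -> S2 (c x) (c y) (c z).

Definition col1 (v : V) : nat :=
  match v with VU => 0 | VV => 1 | VH _ => 0 | VX _ _ => 1 | VY _ _ => 0
  | VA _ => 2 | VB _ => 2 | VC _ => 0 | VQ s => if val s == 0 then 2 else 0
  | VR s => if val s == 0 then 2 else 0 end.

Ltac fin :=
  intros;
  repeat match goal with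
  | H : ?i = lift ?i ?k |- _ => by move: (neq_lift i k); rewrite -H eqxx
  | H : lift ?i ?k = ?i |- _ => by move: (neq_lift i k); rewrite H eqxx
  | H : is_true (_ && _) |- _ => case/andP: H => ? ?
  | H : is_true (_ || _) |- _ => case/orP: H => ?
  | H : is_true (_ == _) |- _ => move/eqP: H => H; subst
  | s : 'I_3 |- _ => let Hs := fresh in destruct s as [[|[|[|?]]] Hs]; simpl in *; try discriminate
  end; rewrite /S2 /=; try (match goal with |- context [bump ?a ?b] => have /eqP ? := neq_bump a b end); try lia.

Lemma col1_worm : wormV col1.
Proof.
move=> x y z; case: x => [||i|i k|i k|i|i|i|s|s]; case: y => [||i'|i' k'|i' k'|i'|i'|i'|s'|s'];
 case: z => [||i''|i'' k''|i'' k''|i''|i''|i''|s''|s''] => //=; rewrite /adj /= => // H1 H2 H3; fin.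
Qed.

Definition col2 (v : V) : nat :=
  match v with VU => 0 | VV => 0 | VH i => (val i).+1 | VX i _ => (val i).+1
  | VY i k => (val (lift i k)).+1
  | VA _ => 0 | VB _ => 0 | VC j => (val j).+1 | VQ s => if val s == 0 then 0 else 1
  | VR s => if val s == 0 then 0 else 1 end.

Lemma col2_worm : wormV col2.
Proof.
move=> x y z; case: x => [||i|i k|i k|i|i|i|s|s]; case: y => [||i'|i' k'|i' k'|i'|i'|i'|s'|s'];
 case: z => [||i''|i'' k''|i'' k''|i''|i''|i''|s''|s''] => //=; rewrite /adj /= => // H1 H2 H3; fin.
Qed.

Definition q0 : 'I_3 := @Ordinal 3 0 isT.
Definition q1 : 'I_3 := @Ordinal 3 1 isT.
Definition q2 : 'I_3 := @Ordinal 3 2 isT.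

Lemma worm_of (c : V -> nat) : K3_worm adj c -> wormV c.
Proof. by move=> H x y z a b d; apply/sz2P; apply: H; split. Qed.

Lemma num_le (T : finType) (c : T -> nat) (S : seq nat) :
  (forall v, c v \in S) -> num_colors c <= size S.
Proof.
move=> H; rewrite /num_colors; apply: uniq_leq_size; first exact: undup_uniq.
by move=> x; rewrite mem_undup => /mapP [v _ ->].
Qed.

Lemma num_ge (T : finType) (c : T -> nat) (L : seq nat) :
  uniq L -> (forall x, x \in L -> exists v, x = c v) -> size L <= num_colors c.
Proof.
move=> U H; rewrite /num_colors; apply: uniq_leq_size => // x /H [v ->].
by rewrite mem_undup; apply: map_f; rewrite mem_enum.
Qed.

Lemma modeB (c : V -> nat) : K3_worm adj c -> c VU = c VV -> K.+2 <= num_colors c.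
Proof.
move=> /worm_of W E.
have T := fun x y z (h1 : adj x y) (h2 : adj y z) (h3 : adj x z) => W x y z h1 h2 h3.
  have hne : forall i, c (VH i) <> c VU.
  move=> i; have := T VU VV (VH i) isT isT isT; rewrite -E /S2; lia.
have key : forall i k, c (VH i) <> c (VH (lift i k)).
  move=> i k.
  have xne : c (VX i k) <> c VU.
    have := T VU VV (VX i k) isT isT isT; rewrite -E /S2; lia.
  have hx : c (VH i) = c (VX i k).
    have := T VU (VH i) (VX i k) isT ltac:(by rewrite /adj /= eqxx) isT.
    move: (hne i) xne; rewrite /S2; lia.
  have yne : c (VY i k) <> c (VH i).
    have := T (VH i) (VX i k) (VY i k) ltac:(by rewrite /adj /= eqxx) ltac:(by rewrite /adj /= ?eqxx ?orbT)
      ltac:(by rewrite /adj /= ?eqxx ?orbT).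
    rewrite -hx /S2; lia.
  set j := lift i k.
  have -> : c (VH j) = c (VY i k).
    apply: (@k5e (c (VA j)) (c (VB j)) (c (VC j))); apply: T; by rewrite /adj /= ?eqxx ?orbT.
  by move=> e; apply: yne.
have inj : forall i j, i != j -> c (VH i) <> c (VH j).
  move=> i j; case: (unliftP i j) => [k ->|->]; last by rewrite eqxx.
  by move=> _; apply: key.
have U : uniq (c VU :: [seq c (VH i) | i <- enum 'I_K.+1]).
  rewrite /= map_inj_in_uniq ?enum_uniq; last first.
    move=> i j _ _ e; apply/eqP; apply/negPn/negP => nij; exact: (inj i j nij e).
  rewrite andbT; apply/mapP => [[i _ e]]; exact: (hne i (esym e)).
apply: leq_trans (num_ge U _); first by rewrite /= size_map (size_enum_ord K.+1).
move=> x; rewrite inE => /orP [/eqP ->|/mapP [i _ ->]]; by eexists.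
Qed.

Lemma dichV (c : V -> nat) : K3_worm adj c -> num_colors c <= 8 \/ K.+2 <= num_colors c.
Proof.
move=> /worm_of W.
have T := fun x y z (h1 : adj x y) (h2 : adj y z) (h3 : adj x z) => W x y z h1 h2 h3.
case: (eqVneq (c VU) (c VV)) => [E|NE].
- right.
  have hne : forall i, c (VH i) <> c VU.
    move=> i; have := T VU VV (VH i) isT isT isT; rewrite -E /S2; lia.
  have key : forall i k, c (VH i) <> c (VH (lift i k)).
    move=> i k.
    have xne : c (VX i k) <> c VU.
      have := T VU VV (VX i k) isT isT isT; rewrite -E /S2; lia.
    have hx : c (VH i) = c (VX i k).
      have := T VU (VH i) (VX i k) isT ltac:(by rewrite /adj /= eqxx) isT.
      move: (hne i) xne; rewrite /S2; lia.
    have yne : c (VY i k) <> c (VH i).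
      have := T (VH i) (VX i k) (VY i k) ltac:(by rewrite /adj /= eqxx) ltac:(by rewrite /adj /= ?eqxx ?orbT)
        ltac:(by rewrite /adj /= ?eqxx ?orbT).
      rewrite -hx /S2; lia.
    set j := lift i k.
    have -> : c (VH j) = c (VY i k).
      apply: (@k5e (c (VA j)) (c (VB j)) (c (VC j))); apply: T; by rewrite /adj /= ?eqxx ?orbT.
    by move=> e; apply: yne.
  have inj : forall i j, i != j -> c (VH i) <> c (VH j).
    move=> i j; case: (unliftP i j) => [k ->|->]; last by rewrite eqxx.
    by move=> _; apply: key.
  have U : uniq (c VU :: [seq c (VH i) | i <- enum 'I_K.+1]).
    rewrite /= map_inj_in_uniq ?enum_uniq; last first.
      move=> i j _ _ e; apply/eqP; apply/negPn/negP => nij; exact: (inj i j nij e).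
    rewrite andbT; apply/mapP => [[i _ e]]; exact: (hne i (esym e)).
  apply: leq_trans (num_ge U _); first by rewrite /= size_map (size_enum_ord K.+1).
  move=> x; rewrite inE => /orP [/eqP ->|/mapP [i _ ->]]; by eexists.
- left.
  have o3 : forall s : 'I_3, s = q0 \/ s = q1 \/ s = q2.
    by case=> [[|[|[|]]] ?] //; [left|right;left|right;right]; apply: val_inj.
  pose S := [:: c VU; c VV; c (VQ q0); c (VQ q1); c (VQ q2); c (VR q0); c (VR q1); c (VR q2)].
  have sS : size S = 8 by [].
  rewrite -sS; apply: num_le.
  have inQ : forall s, c (VQ s) \in S.
    by move=> s; case: (o3 s) => [->|[->|->]]; rewrite /S !inE eqxx ?orbT.
  have inR : forall s, c (VR s) \in S.
    by move=> s; case: (o3 s) => [->|[->|->]]; rewrite /S !inE eqxx ?orbT.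
  have NE' : c VU <> c VV by move/eqP: NE.
  have inWs : forall z, S2 (c VU) (c VV) z -> z \in S.
    by move=> z /(inW NE') [->|->]; rewrite /S inE ?eqxx // inE eqxx orbT.
  have inH : forall i, c (VH i) \in S.
    by move=> i; apply: inWs; apply: T.
  have inA : forall j, c (VA j) \in S.
    move=> j; have := @in3 (c (VQ q0)) (c (VQ q1)) (c (VQ q2)) (c (VA j)).
    case; try (apply: T; by rewrite /adj /= ?eqxx ?orbT).
      by move=> ->. by case=> ->.
  have inB : forall j, c (VB j) \in S.
    move=> j; have := @in3 (c (VR q0)) (c (VR q1)) (c (VR q2)) (c (VB j)).
    case; try (apply: T; by rewrite /adj /= ?eqxx ?orbT).
      by move=> ->. by case=> ->.
  have inC : forall j, c (VC j) \in S.
    move=> j; have := @in3 (c (VA j)) (c (VB j)) (c (VH j)) (c (VC j)).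
    case; try (apply: T; by rewrite /adj /= ?eqxx ?orbT).
      by move=> ->. by case=> ->.
  case=> [|||i k|i k|i|i|i|s|s] //.
  + by rewrite /S inE eqxx.
  + by rewrite /S !inE eqxx orbT.
  + by apply: inWs; apply: T.
  + set j := lift i k.
    have := @in3 (c (VA j)) (c (VB j)) (c (VC j)) (c (VY i k)).
    case; try (apply: T; by rewrite /adj /= ?eqxx ?orbT).
      by move=> ->. by case=> ->.
Qed.

Lemma col1_le : num_colors col1 <= 3.
Proof.
apply: (@num_le _ _ [:: 0; 1; 2]) => v.
by case: v => //= *; case: ifP.
Qed.

Lemma wormK (c : V -> nat) : wormV c -> K3_worm adj c.
Proof. by move=> W x y z [h1 h2 h3]; apply/sz2P; apply: W. Qed.

Lemma col2_ge : K.+2 <= num_colors col2.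
Proof. by apply: modeB => //; apply: wormK; apply: col2_worm. Qed.
End G.

Lemma num_colors_comp (T1 T2 : finType) (f : T1 -> T2) (g : T2 -> T1) (fK : cancel g f)
  (c : T2 -> nat) : num_colors (fun x => c (f x)) = num_colors c.
Proof.
rewrite /num_colors; apply: perm_size; apply: uniq_perm; try exact: undup_uniq.
move=> y; rewrite !mem_undup; apply/mapP/mapP => [[x _ ->]|[z _ ->]].
  by exists (f x); rewrite ?mem_enum.
by exists (g z); rewrite ?mem_enum ?fK.
Qed.

Lemma num_colors_le (T : finType) (c : T -> nat) : num_colors c <= #|T|.
Proof. by rewrite /num_colors (leq_trans (size_undup _)) // size_map cardE. Qed.

Section Tr.
Variable T : finType.
Variable eT : rel T.
Definition eI : rel 'I_#|T| := fun x y => eT (enum_val x) (enum_val y).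

Lemma feas_tr s : feasible eI s <-> feasible eT s.
Proof.
split => [[c [W <-]] | [c [W <-]]].
- exists (fun t => c (enum_rank t)); split.
    move=> x y z [h1 h2 h3]; apply: W; split; by rewrite /eI !enum_rankK.
  exact: (num_colors_comp (@enum_valK T)).
- exists (fun i => c (enum_val i)); split.
    by move=> x y z [h1 h2 h3]; apply: W; split.
  exact: (num_colors_comp (@enum_rankK T)).
Qed.
End Tr.

Lemma ex_min (P : nat -> Prop) : (exists k, P k) -> exists k, P k /\ forall s, P s -> k <= s.
Proof.
move=> [k Pk].
suff H : forall b k, k <= b -> P k -> exists k, P k /\ forall s, P s -> k <= s.
  exact: (H k k (leqnn k) Pk).
clear k Pk; elim=> [|b IH] k kb Pk'.
  exists k; split => // s _; move: kb; rewrite leqn0 => /eqP ->; done.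
case: (classic (exists s, s < k /\ P s)) => [[s [sk Ps]]|nx].
  apply: (IH s) => //; lia.
exists k; split => // s Ps; rewrite leqNgt; apply/negP => sk; apply: nx; by exists s.
Qed.

Lemma ex_max (P : nat -> Prop) B : (exists k, P k) -> (forall s, P s -> s <= B) ->
  exists k, P k /\ forall s, P s -> s <= k.
Proof.
move=> [k Pk] HB.
have [j [[jB Pj] jm]] := @ex_min (fun j => j <= B /\ P (B - j)) (ex_intro _ (B - k) (conj (leq_subr _ _) (eq_ind_r P Pk (subKn (HB k Pk))))).
exists (B - j); split => // s Ps.
have sB := HB s Ps.
have := jm (B - s) (conj (leq_subr _ _) (eq_ind_r P Ps (subKn sB))); lia.
Qed.


Theorem mainTheorem4 :
  forall m : nat, 0 < m ->
  exists (n : nat) (e : rel 'I_n),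
    simple_graph e /\ K3_worm_colorable e /\
    exists (a wmin wmax : nat),
      [/\ is_Wminus e wmin, is_Wplus e wmax,
          wmin < a, a + m - 1 < wmax &
          forall k, a <= k <= a + m - 1 -> ~ feasible e k].
Proof.
move=> m m0.
pose K := m + 7.
exists _, (eI (@adj K)).
have Hf : forall s, feasible (eI (@adj K)) s <-> feasible (@adj K) s := feas_tr (@adj K).
have gap : forall s, feasible (@adj K) s -> s <= 8 \/ K.+2 <= s.
  by move=> s [c [W <-]]; apply: dichV.
have F1 : feasible (eI (@adj K)) (num_colors (@col1 K)).
  by apply/Hf; exists (@col1 K); split => //; apply: wormK; exact: col1_worm.
have F2 : feasible (eI (@adj K)) (num_colors (@col2 K)).
  by apply/Hf; exists (@col2 K); split => //; apply: wormK; exact: col2_worm.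
split.
  by split => [x y|x]; rewrite /eI ?adj_irr // adj_sym.
split; first by case: F1 => c [W _]; exists c.
have [wmin [Pmin Hmin]] := ex_min (ex_intro _ _ F1).
have [wmax [Pmax Hmax]] := @ex_max _ #|{: V K}| (ex_intro _ _ F2)
  (fun s H => match proj1 (Hf s) H with ex_intro c (conj _ e) => eq_ind _ (fun t => t <= #|{: V K}|) (num_colors_le c) _ e end).
exists 9, wmin, wmax; split => //.
- have := Hmin _ F1; have := col1_le K; lia.
- have := Hmax _ F2; have := col2_ge K; rewrite /K; lia.
- move=> k /andP [k1 k2] /Hf /gap; rewrite /K; lia.
Qed.
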